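(* Let $\overline{\mathcal{X}}$ be a partition of $\mathcal{X}$ and let $\mathbf{f}=\{f_n\}_{n=1}^\infty$ be a sequence of functions $f_n:\mathcal{X}^n\times\mathcal{Y}^n\to\mathcal{Z}_n$ such that $f_n$ is $\overline{\mathcal{X}}$-informative for every $n$. Then for every general source $(\mathbf{X},\mathbf{Y})$ that is smooth with respect to $\mathbf{Y}$, $$R(\mathbf{X}|\mathbf{Y}|\mathbf{f})=R_{\mathsf{SW}}([\mathbf{X}]_{\overline{\mathcal{X}}}|\mathbf{Y}).$$
   Context: Finite alphabets $\mathcal{X}=\{0,\dots,|\mathcal{X}|-1\}$, $\mathcal{Y}=\{0,\dots,|\mathcal{Y}|-1\}$. A general source $(\mathbf{X},\mathbf{Y})=\{(X^n,Y^n)\}_{n\ge1}$ is an arbitrary sequence of joint distributions $P_{X^nY^n}$ on $\mathcal{X}^n\times\mathcal{Y}^n$ (no stationarity, memorylessness or ergodicity is assumed). For a sequence $\mathbf{f}=\{f_n\}$, $f_n:\mathcal{X}^n\times\mathcal{Y}^n\to\mathcal{Z}_n$, a code $\Phi_n=(\varphi_n,\psi_n)$ consists of an encoder $\varphi_n:\mathcal{X}^n\to\mathcal{M}_n$ and a decoder $\psi_n:\mathcal{M}_n\times\mathcal{Y}^n\to\mathcal{Z}_n$, with error probability $\Pr(\psi_n(\varphi_n(X^n),Y^n)\ne f_n(X^n,Y^n))$. A rate $R$ is achievable if there are codes with error probability $\to0$ and $\limsup_n \frac1n\log|\mathcal{M}_n|\le R$; $R(\mathbf{X}|\mathbf{Y}|\mathbf{f})$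 is the infimum of achievable rates. The Slepian–Wolf rate $R_{\mathsf{SW}}(\mathbf{X}|\mathbf{Y})$ is $R(\mathbf{X}|\mathbf{Y}|\mathbf{f}^{\mathsf{id}})$ for $f_n^{\mathsf{id}}(\mathbf{x},\mathbf{y})=\mathbf{x}$ (for a source with first component on another finite alphabet the same definitions apply). Logs are base 2. A source is smooth with respect to $\mathbf{Y}$ if there is a constant $0<q<1$ independent of $n$ with $P_{X^nY^n}(\mathbf{x},\hat{\mathbf{y}})\ge qP_{X^nY^n}(\mathbf{x},\mathbf{y})$ for all $n$, $\mathbf{x}\in\mathcal{X}^n$ and $\mathbf{y},\hat{\mathbf{y}}\in\mathcal{Y}^n$ at Hamming distance $1$. For a partition $\overline{\mathcal{X}}$ of $\mathcal{X}$ and $x\in\mathcal{X}$, $[x]_{\overline{\mathcal{X}}}$ is the cell containing $x$; $[\mathbf{x}]_{\overline{\mathcal{X}}}=([x_1]_{\overline{\mathcal{X}}},\dots,[x_n]_{\overline{\mathcal{X}}})$. The source $([\mathbf{X}]_{\overline{\mathcal{X}}},\mathbf{Y})=\{([X^n]_{\overline{\mathcal{X}}},Y^n)\}$ has $P_{[X^n]Y^n}(\overline{\mathbf{x}},\mathbf{y})=\sum_{\mathbf{x}:[\mathbf{x}]_{\overline{\mathcal{X}}}=\overline{\mathbf{x}}}P_{X^nY^n}(\mathbf{x},\mathbf{y})$, on alphabet $\overline{\mathcal{X}}\times\mathcal{Y}$. For $a\in\mathcal{X}$, $\mathbf{x}\in\mathcal{X}^n$, $i\in[1:n]$, $a\mathbf{x}^{(-i)}$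 is $\mathbf{x}$ with its $i$th entry replaced by $a$; similarly $b\mathbf{y}^{(-i)}$. For a permutation $\sigma$ of $[1:n]$, $\sigma(\mathbf{x})$ is the sequence with $i$th entry $x_{\sigma(i)}$. $f_n$ is $\overline{\mathcal{X}}$-informative if (1) for each $i\in[1:n]$ there is a map $\xi_n^{(i)}:\mathcal{Z}_n^{|\mathcal{Y}|}\to\overline{\mathcal{X}}$ with $\xi_n^{(i)}\big((f_n(a\mathbf{x}^{(-i)},b\mathbf{y}^{(-i)}):b\in\mathcal{Y})\big)=[a]_{\overline{\mathcal{X}}}$ for all $a\in\mathcal{X}$, $(\mathbf{x},\mathbf{y})\in\mathcal{X}^n\times\mathcal{Y}^n$; and (2) $f_n(\sigma(\mathbf{x}),\mathbf{y})=f_n(\mathbf{x},\mathbf{y})$ for all $(\mathbf{x},\mathbf{y})$ and all permutations $\sigma$ of $[1:n]$ with $[\sigma(\mathbf{x})]_{\overline{\mathcal{X}}}=[\mathbf{x}]_{\overline{\mathcal{X}}}$. *)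

(* Defs.v *)
From mathcomp Require Import all_boot.
From Stdlib Require Import Reals ClassicalEpsilon.

Set Implicit Arguments.
Unset Strict Implicit.
Unset Printing Implicit Defensive.

(* A general source: for each n a (sub)probability table on X^n x Y^n. *)
Definition source (X Y : finType) :=
  forall n : nat, {ffun 'I_n -> X} -> {ffun 'I_n -> Y} -> R.

Definition is_source (X Y : finType) (P : source X Y) : Prop :=
  forall n : nat, (0 < n)%N ->
    (forall x y, (0 <= P n x y)%R) /\
    (\big[Rplus/0%R]_(x : {ffun 'I_n -> X}) \big[Rplus/0%R]_(y : {ffun 'I_n -> Y}) P n x y = 1)%R.

Definition hamming (T : finType) (n : nat) (u v : {ffun 'I_n -> T}) : nat :=
  #|[set i : 'I_n | u i != v i]|.

Definition smooth_wrt_Y (X Y : finType) (P : source X Y) : Prop :=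
  exists q : R, (0 < q < 1)%R /\
    forall n (x : {ffun 'I_n -> X}) (y y' : {ffun 'I_n -> Y}),
      hamming y y' = 1%N -> (P n x y' >= q * P n x y)%R.

Record code (X Y : finType) (Z : Type) (n : nat) := Code {
  msize : nat;
  enc : {ffun 'I_n -> X} -> 'I_msize;
  dec : 'I_msize -> {ffun 'I_n -> Y} -> Z
}.
Arguments msize {X Y Z n} c.
Arguments enc {X Y Z n} c x.
Arguments dec {X Y Z n} c m y.

Definition err_prob (X Y : finType) (Z : Type) (n : nat)
  (P : source X Y) (f : {ffun 'I_n -> X} -> {ffun 'I_n -> Y} -> Z)
  (c : code X Y Z n) : R :=
  \big[Rplus/0%R]_(x : {ffun 'I_n -> X}) \big[Rplus/0%R]_(y : {ffun 'I_n -> Y})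
    (if excluded_middle_informative (dec c (enc c x) y = f x y)
     then 0%R else P n x y).

Definition log2 (r : R) : R := (ln r / ln 2)%R.

(* R is achievable: codes with error -> 0 and limsup (1/n) log |M_n| <= R
   (limsup written out: for all eps > 0, eventually (1/n) log|M_n| <= R + eps). *)
Definition achievable (X Y : finType) (Z : nat -> Type) (P : source X Y)
  (f : forall n, {ffun 'I_n -> X} -> {ffun 'I_n -> Y} -> Z n) (r : R) : Prop :=
  exists c : forall n, code X Y (Z n) n,
    Un_cv (fun n => err_prob P (@f n) (c n)) 0%R /\
    forall eps : R, (0 < eps)%R -> exists N : nat, forall n : nat, (N <= n)%N ->
      (log2 (INR (msize (c n.+1))) / INR n.+1 <= r + eps)%R.

Definition is_inf (A : R -> Prop) (r : R) : Prop :=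
  (forall a, A a -> (r <= a)%R) /\
  (forall b, (forall a, A a -> (b <= a)%R) -> (b <= r)%R).

Definition cells (X : finType) (Pt : {set {set X}}) (n : nat)
  (x : {ffun 'I_n -> X}) : {ffun 'I_n -> {set X}} :=
  [ffun i => pblock Pt (x i)].

(* The source ([X], Y), on alphabet {set X} (only the cells of Pt carry mass). *)
Definition quot_source (X Y : finType) (Pt : {set {set X}}) (P : source X Y)
  : source {set X} Y :=
  fun n xb y => \big[Rplus/0%R]_(x : {ffun 'I_n -> X} | cells Pt x == xb) P n x y.

Definition f_id (A B : finType) :
  forall n, {ffun 'I_n -> A} -> {ffun 'I_n -> B} -> {ffun 'I_n -> A} :=
  fun n x _ => x.

Definition achievable_SW (A B : finType) (P : source A B) (r : R) : Prop :=
  @achievable A B (fun n => {ffun 'I_n -> A}) P (@f_id A B) r.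

Definition repl (T : finType) (n : nat) (x : {ffun 'I_n -> T}) (i : 'I_n) (a : T)
  : {ffun 'I_n -> T} := [ffun j => if j == i then a else x j].

Definition permute (T : finType) (n : nat) (s : 'I_n -> 'I_n) (x : {ffun 'I_n -> T})
  : {ffun 'I_n -> T} := [ffun i => x (s i)].

Definition informative (X Y : finType) (Pt : {set {set X}}) (Zn : Type) (n : nat)
  (fn : {ffun 'I_n -> X} -> {ffun 'I_n -> Y} -> Zn) : Prop :=
  (forall i : 'I_n, exists xi : (Y -> Zn) -> {set X},
      forall (a : X) (x : {ffun 'I_n -> X}) (y : {ffun 'I_n -> Y}),
        xi (fun b => fn (repl x i a) (repl y i b)) = pblock Pt a) /\
  (forall (s : 'I_n -> 'I_n), bijective s ->
      forall (x : {ffun 'I_n -> X}) (y : {ffun 'I_n -> Y}),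
        cells Pt (permute s x) = cells Pt x -> fn (permute s x) y = fn x y).

(* Main.v *)
From HB Require Import structures.
Require Import Defs.
From mathcomp Require Import all_boot all_fingroup.
From Stdlib Require Import Reals ClassicalEpsilon Lra Lia FunctionalExtensionality.
From mathcomp Require Import zify.

Set Implicit Arguments.
Unset Strict Implicit.
Unset Printing Implicit Defensive.

HB.instance Definition _ := Monoid.isComLaw.Build R 0%R Rplus
  (fun a b c => esym (Rplus_assoc a b c)) Rplus_comm Rplus_0_l.

Open Scope R_scope.

Lemma rsum_le (I : Type) (r : seq I) (Pr : pred I) (F G : I -> R) :
  (forall i, Pr i -> F i <= G i) ->
  \big[Rplus/0]_(i <- r | Pr i) F i <= \big[Rplus/0]_(i <- r | Pr i) G i.
Proof. move=> h; apply: (big_ind2 (fun a b => a <= b)) => //; [lra | move=> *; lra]. Qed.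

Lemma rsum_ge0 (I : Type) (r : seq I) (Pr : pred I) (F : I -> R) :
  (forall i, Pr i -> 0 <= F i) -> 0 <= \big[Rplus/0]_(i <- r | Pr i) F i.
Proof. move=> h; apply: (big_ind (fun a => 0 <= a)) => //; [lra | move=> *; lra]. Qed.

Lemma rsum_scal (I : Type) (r : seq I) (Pr : pred I) (F : I -> R) c :
  c * \big[Rplus/0]_(i <- r | Pr i) F i = \big[Rplus/0]_(i <- r | Pr i) (c * F i).
Proof.
apply: (big_morph (fun x => c * x)); [move=> a b; ring | ring].
Qed.

Lemma INR_sum (I : Type) (r : seq I) (Pr : pred I) (F : I -> nat) :
  INR (\sum_(i <- r | Pr i) F i) = \big[Rplus/0]_(i <- r | Pr i) INR (F i).
Proof. apply: (big_morph INR); [move=> a b; exact: plus_INR | done]. Qed.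

Lemma assembly (A B : R -> Prop) :
  (exists b, B b) -> (forall b, B b -> 0 <= b) ->
  (forall a, A a -> forall g, 0 < g -> B (a + g)) -> (forall b, B b -> A b) ->
  exists r, is_inf A r /\ is_inf B r.
Proof.
move=> [b0 Bb0] Bge0 AB BA.
have Eb : bound (fun x => B (- x)).
  by exists 0 => x Bx; have := Bge0 _ Bx; lra.
have Ene : exists x, B (- x) by exists (- b0); rewrite Ropp_involutive.
have [m [Hub Hlub]] := completeness _ Eb Ene.
have infB : is_inf B (- m).
  split.
    move=> b Bb; have : - b <= m by apply: Hub; rewrite Ropp_involutive.
    lra.
  move=> lb Hlb; suff : m <= - lb by lra.
  apply: Hlub => x Bx; have := Hlb _ Bx; lra.
exists (- m); split => //; split.
  move=> a Aa; apply: Rnot_lt_le => Hlt.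
  have := (proj1 infB) _ (AB a Aa ((- m - a) / 2) ltac:(lra)); lra.
move=> lb Hlb; apply: (proj2 infB) => b Bb; exact: Hlb _ (BA _ Bb).
Qed.


Lemma ln_le_sub1 x : 0 < x -> ln x <= x - 1.
Proof. move=> hx; have := exp_ineq1_le (ln x); rewrite exp_ln //; lra. Qed.

Lemma ln_sublin c eps : 0 <= c -> 0 < eps ->
  exists N, forall n, (N <= n)%nat -> c * ln (INR n.+2) <= eps * INR n.+1.
Proof.
move=> hc he.
set K := 4 * c / eps.
have hK : 0 <= K by rewrite /K; apply: Rmult_le_pos; [lra | apply: Rlt_le; apply: Rinv_0_lt_compat].
have [N HN] := INR_unbounded (K * K).
exists N => n hn.
have hy : INR N <= INR n.+2 by apply: le_INR; apply/leP; rewrite (leq_trans hn) // ltnW.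
set y := INR n.+2 in hy *.
have y2 : 2 <= y by rewrite /y S_INR S_INR; have := pos_INR n; lra.
have hs := sqrt_sqrt y ltac:(lra).
have spos : 0 < sqrt y := sqrt_lt_R0 y ltac:(lra).
have sK : K <= sqrt y.
  rewrite -(sqrt_square K hK); apply: sqrt_le_1_alt; lra.
have hln : ln y = ln (sqrt y) + ln (sqrt y) by rewrite -ln_mult // hs.
have hls := ln_le_sub1 spos.
have hn1 : INR n.+1 = y - 1 by rewrite /y (S_INR n.+1); ring.
rewrite hln hn1.
have eK : eps * K = 4 * c by rewrite /K; field; lra.
have h1 : c * (ln (sqrt y) + ln (sqrt y)) <= 2 * c * sqrt y by nra.
have h2 : 0 <= (sqrt y - K) * (eps * sqrt y).
  apply: Rmult_le_pos; [lra|]; apply: Rmult_le_pos; lra.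
have h3 : eps * K * sqrt y <= eps * (sqrt y * sqrt y) by nra.
rewrite hs eK in h3.
have h4 : eps * 2 <= eps * y by apply: Rmult_le_compat_l; lra.
lra.
Qed.


Definition cnt (X : finType) n (x : {ffun 'I_n -> X}) : {ffun X -> 'I_n.+1} :=
  [ffun a => inord (count_mem a (map x (enum 'I_n)))].

Lemma cnt_perm (X : finType) n (x x' : {ffun 'I_n -> X}) :
  cnt x = cnt x' -> exists s : 'I_n -> 'I_n, bijective s /\ permute s x = x'.
Proof.
move=> hc.
have hcount : forall a, count_mem a (map x (enum 'I_n)) = count_mem a (map x' (enum 'I_n)).
  move=> a; have := congr1 (fun g : {ffun X -> 'I_n.+1} => nat_of_ord (g a)) hc; rewrite /= !ffunE.
  rewrite !inordK // ltnS; apply: (leq_trans (count_size _ _));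
  by rewrite size_map size_enum_ord.
have hpe : perm_eq (map x' (enum 'I_n)) (map_tuple x (ord_tuple n)).
  rewrite /=; apply/allP => a _ /=; by rewrite hcount.
have [p hp] := tuple_permP hpe.
exists p; split; first exact: (injF_bij (@perm_inj _ p)).
apply/ffunP => i; rewrite ffunE.
have ht : map_tuple x' (ord_tuple n) = [tuple tnth (map_tuple x (ord_tuple n)) (p i) | i < n].
  by apply: val_inj; rewrite /= -hp.
have := congr1 (fun t => tnth t i) ht.
by rewrite tnth_map tnth_ord_tuple tnth_mktuple tnth_map tnth_ord_tuple => ->.
Qed.


Lemma quot_sum (X Y : finType) (Pt : {set {set X}}) (P : source X Y) n
  (w : {ffun 'I_n -> {set X}} -> {ffun 'I_n -> Y} -> R) :
  \big[Rplus/0]_(xb : {ffun 'I_n -> {set X}}) \big[Rplus/0]_(y : {ffun 'I_n -> Y})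
     (w xb y * quot_source Pt P xb y) =
  \big[Rplus/0]_(x : {ffun 'I_n -> X}) \big[Rplus/0]_(y : {ffun 'I_n -> Y})
     (w (cells Pt x) y * P n x y).
Proof.
rewrite (partition_big (fun x => cells Pt x) predT) //=.
apply: eq_bigr => xb _.
rewrite exchange_big /=.
apply: eq_bigr => y _.
rewrite /quot_source rsum_scal.
by apply: eq_bigr => x /eqP ->.
Qed.

Lemma if_ind (c : Prop) (d : {c} + {~ c}) (a : R) :
  (if d then 0 else a) = (if d then 0 else 1) * a.
Proof. case: d => h /=; [rewrite Rmult_0_l | rewrite Rmult_1_l]; done. Qed.

Lemma err_quot (X Y : finType) (Pt : {set {set X}}) (P : source X Y) n
  (c : code {set X} Y {ffun 'I_n -> {set X}} n) :
  err_prob (quot_source Pt P) (@f_id {set X} Y n) c =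
  \big[Rplus/0]_(x : {ffun 'I_n -> X}) \big[Rplus/0]_(y : {ffun 'I_n -> Y})
     ((if excluded_middle_informative (dec c (enc c (cells Pt x)) y = cells Pt x)
       then 0 else 1) * P n x y).
Proof.
rewrite /err_prob -(quot_sum Pt P (fun xb y =>
  (if excluded_middle_informative (dec c (enc c xb) y = xb) then 0 else 1))).
apply: eq_bigr => xb _; apply: eq_bigr => y _; exact: if_ind.
Qed.


Lemma ln2_pos : 0 < ln 2.
Proof. have := ln_lt_2; lra. Qed.

Lemma INR_expn a k : INR (expn a k) = INR a ^ k.
Proof. elim: k => [|k IH]; first by []. by rewrite expnS mult_INR IH. Qed.

Lemma INR_pos (a : nat) : (0 < a)%nat -> 0 < INR a.
Proof. by move=> h; apply: lt_0_INR; apply/ltP. Qed.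

Lemma log2_mul a b : (0 < a)%nat -> (0 < b)%nat ->
  log2 (INR (a * b)) = log2 (INR a) + log2 (INR b).
Proof.
move=> ha hb; rewrite /log2 mult_INR ln_mult; try exact: INR_pos.
field; have := ln2_pos; lra.
Qed.

Lemma log2_pow a k : (0 < a)%nat -> log2 (INR (expn a k)) = INR k * log2 (INR a).
Proof.
move=> ha; rewrite /log2 INR_expn ln_pow; last exact: INR_pos.
field; have := ln2_pos; lra.
Qed.

Lemma log2_ge0 a : (0 < a)%nat -> 0 <= log2 (INR a).
Proof.
move=> ha; rewrite /log2; apply: Rmult_le_pos; last first.
  by apply: Rlt_le; apply: Rinv_0_lt_compat; exact: ln2_pos.
rewrite -ln_1; case: (Req_dec (INR a) 1) => [->|h]; first lra.
apply: Rlt_le; apply: ln_increasing; first lra.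
have := le_INR 1 a (ltP ha); rewrite /=; lra.
Qed.


Definition code1 (X Y : finType) (Pt : {set {set X}}) (Z : nat -> Type)
  (f : forall n, {ffun 'I_n -> X} -> {ffun 'I_n -> Y} -> Z n) (x0 : X) n
  (cS : code {set X} Y {ffun 'I_n -> {set X}} n) : code X Y (Z n) n :=
  @Code X Y (Z n) n #|{: 'I_(msize cS) * {ffun X -> 'I_n.+1}}|
    (fun x => enum_rank (enc cS (cells Pt x), cnt x))
    (fun m y => let pr := enum_val m in
       match [pick x' | (cells Pt x' == dec cS pr.1 y) && (cnt x' == pr.2)] with
       | Some x' => f n x' y | None => f n [ffun _ => x0] y end).

Lemma code1_ok (X Y : finType) (Pt : {set {set X}}) (Z : nat -> Type)
  (f : forall n, {ffun 'I_n -> X} -> {ffun 'I_n -> Y} -> Z n) (x0 : X) n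
  (cS : code {set X} Y {ffun 'I_n -> {set X}} n)
  (Hf2 : forall s : 'I_n -> 'I_n, bijective s ->
      forall (x : {ffun 'I_n -> X}) (y : {ffun 'I_n -> Y}),
        cells Pt (permute s x) = cells Pt x -> f n (permute s x) y = f n x y)
  x y :
  dec cS (enc cS (cells Pt x)) y = cells Pt x ->
  dec (code1 Pt f x0 cS) (enc (code1 Pt f x0 cS) x) y = f n x y.
Proof.
move=> h /=; rewrite enum_rankK /= h.
case: pickP => [x' /andP[/eqP hc /eqP hn]|/(_ x)]; last by rewrite !eqxx.
have [s [bs hs]] := cnt_perm (esym hn).
by rewrite -hs Hf2 // hs hc.
Qed.

Lemma msize_pos (A Y : finType) (Zn : Type) n (c : code A Y Zn n) (a : {ffun 'I_n -> A}) :
  (0 < msize c)%nat.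
Proof. by case: c a => m e d a /=; have := ltn_ord (e a); case: m e d. Qed.

Lemma err_ge0 (A Y : finType) (Zn : Type) n (P : source A Y) fn (c : code A Y Zn n) :
  (forall x y, 0 <= P n x y) -> 0 <= err_prob P fn c.
Proof.
move=> hP; rewrite /err_prob; apply: rsum_ge0 => x _; apply: rsum_ge0 => y _.
case: excluded_middle_informative => ? /=; [lra | exact: hP].
Qed.

Lemma squeeze (u v : nat -> R) N : (forall n, (N <= n)%nat -> 0 <= u n <= v n) ->
  Un_cv v 0 -> Un_cv u 0.
Proof.
move=> huv hv eps he; have [N1 HN1] := hv eps he.
exists (maxn N N1) => n /leP hn; have := HN1 n; rewrite /R_dist => h.
have [h1 h2] := huv n (leq_trans (leq_maxl _ _) hn).
have := h (elimT leP (leq_trans (leq_maxr N N1) hn)).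
rewrite Rminus_0_r !Rabs_right; lra.
Qed.

Lemma T1 (X Y : finType) (Pt : {set {set X}}) (Z : nat -> Type)
  (f : forall n, {ffun 'I_n -> X} -> {ffun 'I_n -> Y} -> Z n) (P : source X Y)
  (HP : is_source P) (Hf : forall n, informative Pt (f n)) (x0 : X) s :
  achievable_SW (quot_source Pt P) s -> achievable P f s.
Proof.
case=> cS [Hcv Hrate].
exists (fun n => code1 Pt f x0 (cS n)); split.
  apply: (squeeze (N := 1%nat) _ Hcv) => n hn.
  have hP := proj1 (HP n hn).
  split; first exact: err_ge0.
  rewrite err_quot /err_prob; apply: rsum_le => x _; apply: rsum_le => y _.
  have := hP x y.
  case: excluded_middle_informative => hN /=;
    case: excluded_middle_informative => hS /= hp; try lra.
  by case: hN; apply: code1_ok => //; exact: (proj2 (Hf n)).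
move=> eps he.
have [N1 HN1] := Hrate (eps / 2) ltac:(lra).
have [N2 HN2] := ln_sublin (pos_INR #|X|) (Rmult_lt_0_compat _ _ (ltac:(lra) : 0 < eps / 2) ln2_pos).
exists (maxn N1 N2) => n hn.
have h1 := HN1 n (leq_trans (leq_maxl _ _) hn).
have h2 := HN2 n (leq_trans (leq_maxr _ _) hn).
change (msize (code1 Pt f x0 (cS n.+1))) with #|{: 'I_(msize (cS n.+1)) * {ffun X -> 'I_n.+2}}|.
rewrite card_prod card_ffun !card_ord.
set M := msize (cS n.+1) in h1 *.
have hM : (0 < M)%nat := msize_pos (cS n.+1) [ffun=> set0].
rewrite log2_mul // ?expn_gt0 // log2_pow //.
have hN := INR_pos (ltn0Sn n).
have hl2 := ln2_pos.
rewrite /log2 in h1 *.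
rewrite /Rdiv Rmult_plus_distr_r.
have : INR #|X| * (ln (INR n.+2) * / ln 2) * / INR n.+1 <= eps / 2.
  apply: (Rmult_le_reg_r (ln 2 * INR n.+1)); first exact: Rmult_lt_0_compat.
  have -> : INR #|X| * (ln (INR n.+2) * / ln 2) * / INR n.+1 * (ln 2 * INR n.+1)
            = INR #|X| * ln (INR n.+2) by field; lra.
  lra.
rewrite /Rdiv in h1; lra.
Qed.



Lemma repl_same (T : finType) n (y : {ffun 'I_n -> T}) i a : repl y i a i = a.
Proof. by rewrite ffunE eqxx. Qed.

Lemma repl_repl (T : finType) n (y : {ffun 'I_n -> T}) i a b : repl (repl y i a) i b = repl y i b.
Proof. by apply/ffunP => j; rewrite !ffunE; case: eqP. Qed.

Lemma repl_id (T : finType) n (y : {ffun 'I_n -> T}) i : repl y i (y i) = y.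
Proof. by apply/ffunP => j; rewrite !ffunE; case: eqP => // ->. Qed.

Lemma repl_eq (T : finType) n (y : {ffun 'I_n -> T}) i c : (repl y i c == y) = (y i == c).
Proof.
apply/eqP/eqP => [<-|<-]; first by rewrite repl_same.
exact: repl_id.
Qed.

Lemma rsum_const (T : finType) (K : R) : \big[Rplus/0]_(c : T) K = INR #|T| * K.
Proof.
rewrite big_const; elim: #|T| => [|m IH]; first by rewrite /= Rmult_0_l.
rewrite iterS IH S_INR; ring.
Qed.

Lemma fiber_le (T : finType) n (F : {ffun 'I_n -> T} -> R) i b :
  (forall y, 0 <= F y) ->
  \big[Rplus/0]_(y : {ffun 'I_n -> T}) F (repl y i b) <= INR #|T| * \big[Rplus/0]_y F y.
Proof.
move=> hF.
rewrite (partition_big (fun y : {ffun 'I_n -> T} => y i) predT) //=.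
rewrite -rsum_const; apply: rsum_le => c _.
have -> : \big[Rplus/0]_(y : {ffun 'I_n -> T} | y i == c) F (repl y i b) =
          \big[Rplus/0]_(y : {ffun 'I_n -> T} | y i == b) F y.
  rewrite (reindex_onto (fun y : {ffun 'I_n -> T} => repl y i b) (fun y : {ffun 'I_n -> T} => repl y i c) (P := fun y : {ffun 'I_n -> T} => y i == b)).
    by apply: eq_bigl => y; rewrite repl_same eqxx repl_repl repl_eq.
  by move=> y /eqP hy; rewrite repl_repl -hy repl_id.
rewrite [X in _ <= X](bigID (fun y : {ffun 'I_n -> T} => y i == b)) /=.
have h0 : 0 <= \big[Rplus/0]_(y : {ffun 'I_n -> T} | true && ~~ (y i == b)) F y by apply: rsum_ge0.
have e : \big[Rplus/0]_(y : {ffun 'I_n -> T} | true && (y i == b)) F y = \big[Rplus/0]_(y : {ffun 'I_n -> T} | y i == b) F y by [].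
rewrite e -[X in X <= _]Rplus_0_r; apply: Rplus_le_compat_l; apply: rsum_ge0 => *; exact: hF.
Qed.

Lemma smooth_le (X Y : finType) (P : source X Y) q n (x : {ffun 'I_n -> X}) (y : {ffun 'I_n -> Y}) i b :
  0 < q < 1 ->
  (forall (y y' : {ffun 'I_n -> Y}), hamming y y' = 1%nat -> P n x y' >= q * P n x y) ->
  0 <= P n x y -> P n x y <= / q * P n x (repl y i b).
Proof.
move=> [hq0 hq1] hs hp.
have hq : / q * q = 1 by field; lra.
have hiq : 1 <= / q.
  rewrite -Rinv_1; apply: Rinv_le_contravar; lra.
case: (eqVneq (y i) b) => hb.
  rewrite -hb repl_id; nra.
have hh : hamming y (repl y i b) = 1%nat.
  rewrite /hamming (_ : [set j | y j != repl y i b j] = [set i]) ?cards1 //.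
  apply/setP => j; rewrite !inE ffunE.
  by case: (eqVneq j i) => [->|hj]; rewrite ?eqxx ?hb ?eqxx.
have := hs _ _ hh.
have hiq0 : 0 < / q by apply: Rinv_0_lt_compat.
move=> h; apply: (Rmult_le_reg_l q) => //; rewrite -Rmult_assoc Rinv_r; lra.
Qed.


Lemma count_coll (D : finType) L (a b : D) : a != b ->
  (\sum_(g : {ffun D -> 'I_L}) (g a == g b) = L * expn L (#|D| - 2))%nat.
Proof.
move=> hab.
pose c := fun x : D => (x == a) || (x == b).
have e1 : forall g : {ffun D -> 'I_L}, (g a == g b : nat) =
   (\sum_(v < L) \prod_(x : D) (if c x then (g x == v : nat) else 1))%nat.
  move=> g.
  have e2 : forall v, (\prod_(x : D) (if c x then (g x == v : nat) else 1) = (g a == v) * (g b == v))%nat.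
    move=> v; rewrite (bigD1 a) //= (bigD1 b) /=; last by rewrite eq_sym hab.
    rewrite /c !eqxx orbT /= big1 ?muln1 //.
    move=> x /andP[hxa hxb]; by rewrite (negbTE hxa) (negbTE hxb).
  rewrite (eq_bigr _ (fun v _ => e2 v)) (bigD1 (g a)) //= big1 ?addn0.
    by rewrite eqxx mul1n eq_sym.
  by move=> v hv; rewrite eq_sym (negbTE hv).
rewrite (eq_bigr _ (fun g _ => e1 g)) exchange_big /=.
have e3 : forall v : 'I_L, (\sum_(g : {ffun D -> 'I_L}) \prod_(x : D) (if c x then (g x == v : nat) else 1)
     = expn L (#|D| - 2))%nat.
  move=> v.
  rewrite -(bigA_distr_bigA (fun x (w : 'I_L) => if c x then (w == v : nat) else 1%nat)) /=.
  have e4 : forall x, (\sum_(w < L) (if c x then (w == v : nat) else 1) = if c x then 1 else L)%nat.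
    move=> x; case: (c x).
      by rewrite (bigD1 v) //= eqxx big1 // => w /negbTE ->.
    by rewrite sum_nat_const card_ord muln1.
  rewrite (eq_bigr _ (fun x _ => e4 x)).
  rewrite (eq_bigr (fun x => if ~~ c x then L else 1%nat)); last by move=> x _; case: (c x).
  rewrite -big_mkcond /= prod_nat_const.
  congr (expn _ _).
  have := cardC c; rewrite -addnC => <-.
  rewrite (_ : #|c| = 2)%nat ?addnK //.
  have := cards2 a b; rewrite hab => <-; apply: eq_card => x; by rewrite !inE.
rewrite (eq_bigr _ (fun v _ => e3 v)) sum_nat_const card_ord.
by [].
Qed.


Lemma ball_card (T : finType) n (e : {ffun 'I_n -> T}) k T0 : (0 < T0)%nat ->
  (#|[set xb : {ffun 'I_n -> T} | (#|[set i | xb i != e i]| <= k)%nat]| * expn T0 (n - k)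
     <= expn (T0 + #|T|) n)%nat.
Proof.
move=> hT0.
set S := [set xb : {ffun 'I_n -> T} | _].
pose ag (xb : {ffun 'I_n -> T}) := #|[set i | xb i == e i]|.
have hag : forall xb, xb \in S -> (n - k <= ag xb)%nat.
  move=> xb; rewrite inE => hk.
  have hc := cardsC [set i | xb i == e i].
  rewrite card_ord (_ : (~: [set i | xb i == e i]) = [set i | xb i != e i]) in hc; last first.
    by apply/setP => i; rewrite !inE.
  rewrite /ag; move: hc hk; move: #|[set i | xb i == e i]| #|[set i | xb i != e i]| => u w; lia.
have e1 : forall xb : {ffun 'I_n -> T},
    expn T0 (ag xb) = (\prod_(i : 'I_n) (if xb i == e i then T0 else 1))%nat.
  move=> xb; rewrite /ag -big_mkcond /= -prod_nat_const; apply: eq_bigl => i; by rewrite inE.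
apply: (@leq_trans (\sum_(xb in S) expn T0 (ag xb))).
  rewrite -sum_nat_const; apply: leq_sum => xb hxb; exact: leq_pexp2l hT0 (hag _ hxb).
apply: (@leq_trans (\sum_(xb : {ffun 'I_n -> T}) expn T0 (ag xb))).
  rewrite [X in (_ <= X)%nat](bigID (fun xb => xb \in S)) /=; exact: leq_addr.
rewrite (eq_bigr _ (fun xb _ => e1 xb)).
rewrite -(bigA_distr_bigA (fun (i : 'I_n) (v : T) => if v == e i then T0 else 1%nat)) /=.
apply: (@leq_trans (\prod_(i : 'I_n) (T0 + #|T|))%nat).
  apply: leq_prod => i _.
  rewrite (bigD1 (e i)) //= eqxx leq_add2l.
  apply: (@leq_trans (\sum_(v : T) 1)%nat); last by rewrite sum1_card.
  rewrite [X in (_ <= X)%nat](bigID (fun v => v != e i)) /=.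
  apply: leq_trans (leq_addr _ _).
  by apply: leq_sum => v /negbTE ->.
by rewrite prod_nat_const card_ord.
Qed.


Lemma card_exists_le (T I : finType) (Qp : I -> T -> bool) :
  (#|[set x | [exists m, Qp m x]]| <= \sum_m #|[set x | Qp m x]|)%nat.
Proof.
rewrite -sum1_card.
apply: (@leq_trans (\sum_(x in [set x | [exists m, Qp m x]]) \sum_m (Qp m x : nat))%nat).
  apply: leq_sum => x; rewrite inE => /existsP[m hm].
  by rewrite (bigD1 m) //= hm leq_addr.
apply: (@leq_trans (\sum_x \sum_m (Qp m x : nat))%nat).
  rewrite [X in (_ <= X)%nat](bigID (fun x => x \in [set x | [exists m, Qp m x]])) /=.
  exact: leq_addr.
rewrite exchange_big; apply: leq_sum => m _.
rewrite -sum1_card [X in (_ <= X)%nat]big_mkcond /=.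
by apply: leq_sum => x _; rewrite inE; case: (Qp m x).
Qed.

Lemma rsum_mulr (I : Type) (r : seq I) (Pr : pred I) (F : I -> R) c :
  (\big[Rplus/0]_(i <- r | Pr i) F i) * c = \big[Rplus/0]_(i <- r | Pr i) (F i * c).
Proof. rewrite Rmult_comm rsum_scal; apply: eq_bigr => i _; ring. Qed.

Lemma avg_exists (T : finType) (F : T -> R) B (t0 : T) :
  \big[Rplus/0]_t F t <= INR #|T| * B -> exists t, F t <= B.
Proof.
move=> h; case: (classic (exists t, F t <= B)) => // hn; exfalso.
have hlt : forall t, B < F t by move=> t; apply: Rnot_le_lt => ht; apply: hn; exists t.
have e : \big[Rplus/0]_t F t = \big[Rplus/0]_t (F t - B) + \big[Rplus/0]_(t : T) B.
  by rewrite -big_split /=; apply: eq_bigr => t _; ring.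
rewrite e rsum_const in h.
rewrite (bigD1 t0) //= in h.
have : 0 <= \big[Rplus/0]_(t | t != t0) (F t - B).
  apply: rsum_ge0 => t _; have := hlt t; lra.
have := hlt t0; lra.
Qed.

Definition ind (b : bool) : R := if b then 1 else 0.

Lemma ind_ge0 b : 0 <= ind b.
Proof. rewrite /ind; case: b; lra. Qed.

Lemma ind_le1 b : ind b <= 1.
Proof. rewrite /ind; case: b; lra. Qed.

Lemma rsum_ind (T : finType) (A : {set T}) : \big[Rplus/0]_(x : T) ind (x \in A) = INR #|A|.
Proof.
rewrite -sum1_card INR_sum [RHS]big_mkcond /=; apply: eq_bigr => x _.
by rewrite /ind; case: (x \in A).
Qed.

Definition bincode (A Y : finType) n L (xb0 : {ffun 'I_n -> A}) (G : {ffun 'I_n -> Y} -> {set {ffun 'I_n -> A}})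
  (g : {ffun {ffun 'I_n -> A} -> 'I_L}) : code A Y {ffun 'I_n -> A} n :=
  @Code A Y {ffun 'I_n -> A} n L (fun xb => g xb)
    (fun l y => match [pick xb' in G y | g xb' == l] with
                | Some xb' => xb' | None => xb0 end).


Lemma bincode_ok (A Y : finType) n L (xb0 : {ffun 'I_n -> A})
  (G : {ffun 'I_n -> Y} -> {set {ffun 'I_n -> A}}) (g : {ffun {ffun 'I_n -> A} -> 'I_L})
  (xb : {ffun 'I_n -> A}) (y : {ffun 'I_n -> Y}) :
  xb \in G y -> (forall xb', xb' \in G y -> xb' != xb -> g xb' != g xb) ->
  dec (bincode xb0 G g) (enc (bincode xb0 G g) xb) y = xb.
Proof.
move=> hx hu /=.
case: pickP => [xb' /andP[hx' /eqP hg]|/(_ xb)]; last by rewrite hx eqxx.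
case: (eqVneq xb' xb) => // hne.
by have := hu _ hx' hne; rewrite hg eqxx.
Qed.

Lemma per_point (A Y : finType) n L K (xb0 : {ffun 'I_n -> A}) (G : {ffun 'I_n -> Y} -> {set {ffun 'I_n -> A}}) :
  (0 < L)%nat -> (forall y, #|G y| <= K)%nat -> forall xb y,
  \big[Rplus/0]_(g : {ffun {ffun 'I_n -> A} -> 'I_L})
     (if excluded_middle_informative
           (dec (bincode xb0 G g) (enc (bincode xb0 G g) xb) y = @f_id A Y n xb y)
      then 0 else 1)
  <= INR #|{: {ffun {ffun 'I_n -> A} -> 'I_L}}| * (ind (xb \notin G y) + INR K / INR L).
Proof.
move=> hL hK xb y.
set NF := INR #|{: {ffun {ffun 'I_n -> A} -> 'I_L}}|.
have hNF : 0 <= NF by apply: pos_INR.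
have hLp := INR_pos hL.
have hKL : 0 <= INR K / INR L.
  apply: Rmult_le_pos; [exact: pos_INR | apply: Rlt_le; exact: Rinv_0_lt_compat].
case hx: (xb \in G y); last first.
  have h1 : \big[Rplus/0]_(g : {ffun {ffun 'I_n -> A} -> 'I_L})
     (if excluded_middle_informative
           (dec (bincode xb0 G g) (enc (bincode xb0 G g) xb) y = @f_id A Y n xb y)
      then 0 else 1) <= NF * 1.
    rewrite /NF -rsum_const; apply: rsum_le => g _.
    case: excluded_middle_informative => ? /=; lra.
  have h2 : 0 <= NF * (INR K / INR L) by apply: Rmult_le_pos.
  have e : ind (~~ false) = 1 by [].
  rewrite e; lra.
rewrite /ind /= Rplus_0_l.
pose c (xb' : {ffun 'I_n -> A}) := (xb' \in G y) && (xb' != xb).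
apply: (@Rle_trans _ (\big[Rplus/0]_(g : {ffun {ffun 'I_n -> A} -> 'I_L})
          \big[Rplus/0]_(xb' : {ffun 'I_n -> A}) ind (c xb' && (g xb' == g xb)))).
  apply: rsum_le => g _.
  case: excluded_middle_informative => hok /=.
    apply: rsum_ge0 => *; exact: ind_ge0.
  have [xb' [hx' hne hg]] : exists xb', [/\ xb' \in G y, xb' != xb & g xb' = g xb].
    apply: NNPP => hno; apply: hok; apply: bincode_ok => // xb' hx' hne.
    apply/negP => /eqP hg; apply: hno; by exists xb'.
  rewrite (bigD1 xb') //= /c hx' hne hg eqxx /= /ind.
  have : 0 <= \big[Rplus/0]_(i | i != xb') ind (((i \in G y) && (i != xb)) && (g i == g xb)).
    apply: rsum_ge0 => *; exact: ind_ge0.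
  move=> h; apply: (Rle_trans _ (1 + 0)); [lra | apply: Rplus_le_compat_l; exact: h].
rewrite exchange_big /=.
apply: (@Rle_trans _ (\big[Rplus/0]_(xb' : {ffun 'I_n -> A}) (ind (xb' \in G y) * (NF / INR L)))).
  apply: rsum_le => xb' _.
  rewrite /c; case: (xb' \in G y) => /=; last first.
    rewrite /ind big1 /=; [lra | by []].
  case: (eqVneq xb' xb) => hne /=.
    rewrite /ind big1 /=; first by apply: Rmult_le_pos; [lra | apply: Rmult_le_pos => //; apply: Rlt_le; apply: Rinv_0_lt_compat].
    by [].
  have hcnt := count_coll L hne.
  have e : \big[Rplus/0]_(g : {ffun {ffun 'I_n -> A} -> 'I_L}) ind (g xb' == g xb)
         = INR (\sum_(g : {ffun {ffun 'I_n -> A} -> 'I_L}) (g xb' == g xb)).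
    rewrite INR_sum; apply: eq_bigr => g _; rewrite /ind; by case: (g xb' == g xb).
  rewrite e hcnt /ind Rmult_1_l.
  have hD : (1 < #|{: {ffun 'I_n -> A}}|)%nat by apply/card_gt1P; exists xb', xb.
  have eNF : NF = INR L * INR (L * expn L (#|{: {ffun 'I_n -> A}}| - 2)).
    rewrite /NF card_ffun card_ord -mult_INR; congr INR.
    rewrite !multE -!expnS; congr expn; rewrite -addn2 subnK //.
  rewrite eNF /Rdiv Rmult_comm -Rmult_assoc Rinv_l; last lra.
  rewrite Rmult_1_l; exact: Rle_refl.
rewrite -rsum_mulr rsum_ind.
have hG : INR #|G y| <= INR K by apply: le_INR; apply/leP.
have : 0 <= NF / INR L by apply: Rmult_le_pos => //; apply: Rlt_le; apply: Rinv_0_lt_compat.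
move=> h0.
apply: (@Rle_trans _ (INR K * (NF / INR L))); first by apply: Rmult_le_compat_r.
apply: Req_le; rewrite /Rdiv; ring.
Qed.


Lemma binning (A Y : finType) n (S : source A Y) L K (xb0 : {ffun 'I_n -> A})
  (G : {ffun 'I_n -> Y} -> {set {ffun 'I_n -> A}}) :
  (0 < L)%nat -> (forall xb y, 0 <= S n xb y) ->
  \big[Rplus/0]_(xb : {ffun 'I_n -> A}) \big[Rplus/0]_(y : {ffun 'I_n -> Y}) S n xb y <= 1 ->
  (forall y, #|G y| <= K)%nat ->
  exists g : {ffun {ffun 'I_n -> A} -> 'I_L}, err_prob S (@f_id A Y n) (bincode xb0 G g) <=
    \big[Rplus/0]_(xb : {ffun 'I_n -> A}) \big[Rplus/0]_(y : {ffun 'I_n -> Y})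
       (ind (xb \notin G y) * S n xb y) + INR K / INR L.
Proof.
move=> hL hS hS1 hK.
apply: (@avg_exists _ _ _ [ffun=> Ordinal hL]).
set NF := INR #|{: {ffun {ffun 'I_n -> A} -> 'I_L}}|.
have hNF : 0 <= NF by apply: pos_INR.
have hKL : 0 <= INR K / INR L.
  apply: Rmult_le_pos; [exact: pos_INR | apply: Rlt_le; apply: Rinv_0_lt_compat; exact: INR_pos].
rewrite /err_prob.
under eq_bigr => g _ do (under eq_bigr => xb _ do (under eq_bigr => y _ do rewrite if_ind)).
rewrite exchange_big /=.
under eq_bigr => xb _ do rewrite exchange_big /=.
apply: (@Rle_trans _ (\big[Rplus/0]_(xb : {ffun 'I_n -> A}) \big[Rplus/0]_(y : {ffun 'I_n -> Y})
          (NF * (ind (xb \notin G y) + INR K / INR L) * S n xb y))).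
  apply: rsum_le => xb _; apply: rsum_le => y _.
  rewrite -rsum_mulr; apply: Rmult_le_compat_r; first exact: hS.
  exact: per_point.
set c := INR K / INR L.
have E : \big[Rplus/0]_(xb : {ffun 'I_n -> A}) \big[Rplus/0]_(y : {ffun 'I_n -> Y})
          (NF * (ind (xb \notin G y) + c) * S n xb y)
   = NF * (\big[Rplus/0]_(xb : {ffun 'I_n -> A}) \big[Rplus/0]_(y : {ffun 'I_n -> Y})
          (ind (xb \notin G y) * S n xb y))
     + NF * c * (\big[Rplus/0]_(xb : {ffun 'I_n -> A}) \big[Rplus/0]_(y : {ffun 'I_n -> Y}) S n xb y).
  rewrite !rsum_scal -big_split /=; apply: eq_bigr => xb _.
  rewrite !rsum_scal -big_split /=; apply: eq_bigr => y _; ring.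
rewrite E.
have h1 : NF * c * (\big[Rplus/0]_(xb : {ffun 'I_n -> A}) \big[Rplus/0]_(y : {ffun 'I_n -> Y}) S n xb y) <= NF * c * 1.
  apply: Rmult_le_compat_l; [exact: Rmult_le_pos | exact: hS1].
rewrite Rmult_plus_distr_l; apply: Rplus_le_compat_l; apply: (Rle_trans _ _ _ h1); rewrite Rmult_1_r; exact: Rle_refl.
Qed.


Definition pb (Q : Prop) : bool := if excluded_middle_informative Q then true else false.

Lemma pbP (Q : Prop) : reflect Q (pb Q).
Proof. rewrite /pb; case: excluded_middle_informative => h; by constructor. Qed.

Definition badset (X Y : finType) (Zn : Type) n (c : code X Y Zn n)
  (fn : {ffun 'I_n -> X} -> {ffun 'I_n -> Y} -> Zn) x y : {set 'I_n} :=
  [set i | pb (exists b, dec c (enc c x) (repl y i b) <> fn x (repl y i b))].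

Definition est (X Y : finType) (Zn : Type) n (c : code X Y Zn n)
  (xi : 'I_n -> (Y -> Zn) -> {set X}) (m : 'I_(msize c)) (y : {ffun 'I_n -> Y})
  : {ffun 'I_n -> {set X}} :=
  [ffun i => xi i (fun b => dec c m (repl y i b))].

Definition Gset (X Y : finType) (Pt : {set {set X}}) (Zn : Type) n (c : code X Y Zn n)
  (fn : {ffun 'I_n -> X} -> {ffun 'I_n -> Y} -> Zn) k y : {set {ffun 'I_n -> {set X}}} :=
  [set xb | [exists x, (cells Pt x == xb) && (#|badset c fn x y| <= k)%nat]].

Lemma est_ok (X Y : finType) (Pt : {set {set X}}) (Zn : Type) n (c : code X Y Zn n)
  (fn : {ffun 'I_n -> X} -> {ffun 'I_n -> Y} -> Zn) (xi : 'I_n -> (Y -> Zn) -> {set X}) :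
  (forall i a x y, xi i (fun b => fn (repl x i a) (repl y i b)) = pblock Pt a) ->
  forall x y i, i \notin badset c fn x y -> @est _ _ _ _ c xi (enc c x) y i = pblock Pt (x i).
Proof.
move=> hxi x y i; rewrite inE => /pbP hnb.
rewrite ffunE -(hxi i (x i) x y); congr (xi i _).
apply: functional_extensionality => b; rewrite repl_id.
apply: NNPP => hne; apply: hnb; by exists b.
Qed.

Lemma G_card (X Y : finType) (Pt : {set {set X}}) (Zn : Type) n (c : code X Y Zn n)
  (fn : {ffun 'I_n -> X} -> {ffun 'I_n -> Y} -> Zn) (xi : 'I_n -> (Y -> Zn) -> {set X}) k V :
  (forall i a x y, xi i (fun b => fn (repl x i a) (repl y i b)) = pblock Pt a) ->
  (forall e : {ffun 'I_n -> {set X}},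
     #|[set xb : {ffun 'I_n -> {set X}} | (#|[set i | xb i != e i]| <= k)%nat]| <= V)%nat ->
  forall y, (#|Gset Pt c fn k y| <= msize c * V)%nat.
Proof.
move=> hxi hV y.
apply: (@leq_trans #|[set xb : {ffun 'I_n -> {set X}} |
          [exists m : 'I_(msize c), (#|[set i | xb i != @est _ _ _ _ c xi m y i]| <= k)%nat]]|).
  apply: subset_leq_card; apply/subsetP => xb; rewrite !inE => /existsP[x /andP[/eqP hx hb]].
  apply/existsP; exists (enc c x).
  apply: leq_trans hb; apply: subset_leq_card; apply/subsetP => i; rewrite !inE.
  apply: contraR => hi.
  have hi' : i \notin badset c fn x y by rewrite inE.
  by rewrite -hx (est_ok hxi hi') /cells ffunE.
apply: (leq_trans (card_exists_le (fun (m : 'I_(msize c)) (xb : {ffun 'I_n -> {set X}}) =>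
  (#|[set i | xb i != @est _ _ _ _ c xi m y i]| <= k)%nat))).
apply: (@leq_trans (\sum_(m : 'I_(msize c)) V)%nat); first by apply: leq_sum => m _; exact: hV.
by rewrite sum_nat_const card_ord.
Qed.

Lemma exch4 (I1 I2 I3 I4 : finType) (F : I1 -> I2 -> I3 -> I4 -> R) :
  \big[Rplus/0]_(a : I1) \big[Rplus/0]_(b : I2) \big[Rplus/0]_(c : I3) \big[Rplus/0]_(d : I4) F a b c d =
  \big[Rplus/0]_(c : I3) \big[Rplus/0]_(d : I4) \big[Rplus/0]_(a : I1) \big[Rplus/0]_(b : I2) F a b c d.
Proof.
under eq_bigr => a _ do rewrite exchange_big.
under eq_bigr => a _ do (under eq_bigr => c _ do rewrite exchange_big).
rewrite exchange_big.
by under eq_bigr => c _ do rewrite exchange_big.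
Qed.


Lemma markov (X Y : finType) (Zn : Type) n (P : source X Y) (c : code X Y Zn n)
  (fn : {ffun 'I_n -> X} -> {ffun 'I_n -> Y} -> Zn) k q :
  0 < q < 1 -> (forall x y, 0 <= P n x y) ->
  (forall x (y y' : {ffun 'I_n -> Y}), hamming y y' = 1%nat -> P n x y' >= q * P n x y) ->
  \big[Rplus/0]_(x : {ffun 'I_n -> X}) \big[Rplus/0]_(y : {ffun 'I_n -> Y})
     (ind (~~ (#|badset c fn x y| <= k)%nat) * P n x y)
  <= / INR k.+1 * (INR n * (INR #|Y| * (/ q * (INR #|Y| * err_prob P fn c)))).
Proof.
move=> hq hP hs.
pose w x y := if excluded_middle_informative (dec c (enc c x) y = fn x y) then 0 else 1.
have hw : forall x y, 0 <= w x y by move=> x y; rewrite /w; case: excluded_middle_informative => ? /=; lra.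
have hk : 0 < INR k.+1 := INR_pos (ltn0Sn k).
have hik : 0 < / INR k.+1 by apply: Rinv_0_lt_compat.
have hq0 : 0 < / q by apply: Rinv_0_lt_compat; lra.
have s1 : forall x y, ind (~~ (#|badset c fn x y| <= k)%nat) * P n x y <=
    / INR k.+1 * \big[Rplus/0]_(i : 'I_n) \big[Rplus/0]_(b : Y) (w x (repl y i b) * P n x y).
  move=> x y.
  have a1 : ind (~~ (#|badset c fn x y| <= k)%nat) <= / INR k.+1 * INR #|badset c fn x y|.
    rewrite /ind; case: leqP => h.
      apply: Rmult_le_pos; [lra | exact: pos_INR].
    have : INR k.+1 <= INR #|badset c fn x y| by apply: le_INR; apply/leP.
    move=> h2; apply: (Rmult_le_reg_l (INR k.+1)) => //.
    rewrite -Rmult_assoc Rinv_r; lra.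
  have a2 : INR #|badset c fn x y| <= \big[Rplus/0]_(i : 'I_n) \big[Rplus/0]_(b : Y) w x (repl y i b).
    rewrite -rsum_ind; apply: rsum_le => i _.
    rewrite /ind; case hi: (i \in badset c fn x y).
      move: hi; rewrite inE => /pbP [b hb].
      rewrite (bigD1 b) //=.
      have : 0 <= \big[Rplus/0]_(b0 | b0 != b) w x (repl y i b0) by apply: rsum_ge0.
      rewrite /w; case: excluded_middle_informative => //= _; lra.
    by apply: rsum_ge0.
  have e : \big[Rplus/0]_(i : 'I_n) \big[Rplus/0]_(b : Y) (w x (repl y i b) * P n x y) =
           (\big[Rplus/0]_(i : 'I_n) \big[Rplus/0]_(b : Y) w x (repl y i b)) * P n x y.
    rewrite rsum_mulr; apply: eq_bigr => i _; by rewrite rsum_mulr.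
  rewrite e -Rmult_assoc; apply: Rmult_le_compat_r; first exact: hP.
  apply: (Rle_trans _ _ _ a1); apply: Rmult_le_compat_l; lra.
apply: (@Rle_trans _ (/ INR k.+1 * \big[Rplus/0]_(x : {ffun 'I_n -> X}) \big[Rplus/0]_(y : {ffun 'I_n -> Y})
    \big[Rplus/0]_(i : 'I_n) \big[Rplus/0]_(b : Y) (w x (repl y i b) * P n x y))).
  rewrite rsum_scal; apply: rsum_le => x _; rewrite rsum_scal; apply: rsum_le => y _; exact: s1.
apply: Rmult_le_compat_l; first lra.
rewrite exch4.
have herr : err_prob P fn c = \big[Rplus/0]_(x : {ffun 'I_n -> X}) \big[Rplus/0]_(y : {ffun 'I_n -> Y}) (w x y * P n x y).
  rewrite /err_prob; apply: eq_bigr => x _; apply: eq_bigr => y _; exact: if_ind.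
have s4 : forall (i : 'I_n) (b : Y),
  \big[Rplus/0]_(x : {ffun 'I_n -> X}) \big[Rplus/0]_(y : {ffun 'I_n -> Y}) (w x (repl y i b) * P n x y)
  <= / q * (INR #|Y| * err_prob P fn c).
  move=> i b; rewrite herr.
  have eR : / q * (INR #|Y| * \big[Rplus/0]_(x : {ffun 'I_n -> X}) \big[Rplus/0]_(y : {ffun 'I_n -> Y}) (w x y * P n x y))
    = \big[Rplus/0]_(x : {ffun 'I_n -> X}) (/ q * (INR #|Y| * \big[Rplus/0]_(y : {ffun 'I_n -> Y}) (w x y * P n x y))).
    by rewrite -[RHS]rsum_scal -[in RHS]rsum_scal.
  rewrite eR; apply: rsum_le => x _.
  apply: (@Rle_trans _ (/ q * \big[Rplus/0]_(y : {ffun 'I_n -> Y}) (w x (repl y i b) * P n x (repl y i b)))).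
    rewrite rsum_scal; apply: rsum_le => y _.
    have := smooth_le i b hq (hs x) (hP x y).
    move=> h; have := hw x (repl y i b); nra.
  apply: Rmult_le_compat_l; first lra.
  apply: (fiber_le (F := fun y => w x y * P n x y)) => y.
  exact: Rmult_le_pos (hw x y) (hP x y).
apply: (@Rle_trans _ (\big[Rplus/0]_(i : 'I_n) \big[Rplus/0]_(b : Y) (/ q * (INR #|Y| * err_prob P fn c)))).
  apply: rsum_le => i _; apply: rsum_le => b _; exact: s4.
rewrite rsum_const rsum_const card_ord; apply: Req_le; ring.
Qed.


Lemma ln_le x y : 0 < x -> x <= y -> ln x <= ln y.
Proof.
move=> hx hxy; case: (Req_dec x y) => [->|hne]; first lra.
apply: Rlt_le; apply: ln_increasing => //; lra.
Qed.

Lemma SWcode_n (X Y : finType) (Pt : {set {set X}}) (Zn : Type) n (P : source X Y)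
  (fn : {ffun 'I_n -> X} -> {ffun 'I_n -> Y} -> Zn) (c : code X Y Zn n)
  (xi : 'I_n -> (Y -> Zn) -> {set X}) (x0 : X) dd T0 q :
  (0 < dd)%nat -> (0 < T0)%nat -> 0 < q < 1 ->
  (forall x y, 0 <= P n x y) ->
  \big[Rplus/0]_(x : {ffun 'I_n -> X}) \big[Rplus/0]_(y : {ffun 'I_n -> Y}) P n x y = 1 ->
  (forall x (y y' : {ffun 'I_n -> Y}), hamming y y' = 1%nat -> P n x y' >= q * P n x y) ->
  (forall i a x y, xi i (fun b => fn (repl x i a) (repl y i b)) = pblock Pt a) ->
  exists cS : code {set X} Y {ffun 'I_n -> {set X}} n,
    msize cS = (msize c * (expn (T0 + #|{: {set X}}|) n %/ expn T0 (n - n %/ dd)) * n.+1)%nat /\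
    err_prob (quot_source Pt P) (@f_id {set X} Y n) cS <=
      INR dd * (INR #|Y| * (/ q * INR #|Y|)) * err_prob P fn c + / INR n.+1.
Proof.
move=> hdd hT0 hq hP hP1 hs hxi.
set k := (n %/ dd)%nat.
set V := (expn (T0 + #|{: {set X}}|) n %/ expn T0 (n - k))%nat.
have hV : forall e : {ffun 'I_n -> {set X}},
   (#|[set xb : {ffun 'I_n -> {set X}} | (#|[set i | xb i != e i]| <= k)%nat]| <= V)%nat.
  move=> e; rewrite /V leq_divRL ?expn_gt0 ?hT0 //; exact: ball_card.
have hG := @G_card X Y Pt Zn n c fn xi k V hxi hV.
have hM : (0 < msize c)%nat := msize_pos c [ffun=> x0].
have hVp : (0 < V)%nat.
  apply: leq_trans (hV [ffun=> set0]); apply/card_gt0P; exists [ffun=> set0].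
  by rewrite inE (_ : [set i | _] = set0) ?cards0 //; apply/setP => i; rewrite !inE eqxx.
set K := (msize c * V)%nat.
have hK : (0 < K)%nat by rewrite muln_gt0 hM hVp.
have hL : (0 < K * n.+1)%nat by rewrite muln_gt0 hK.
have hQ0 : forall (xb : {ffun 'I_n -> {set X}}) (y : {ffun 'I_n -> Y}), 0 <= quot_source Pt P xb y.
  move=> xb y; rewrite /quot_source /=; apply: rsum_ge0 => x _; exact: hP.
have hQ1 : \big[Rplus/0]_(xb : {ffun 'I_n -> {set X}}) \big[Rplus/0]_(y : {ffun 'I_n -> Y})
             quot_source Pt P xb y <= 1.
  have e2 : \big[Rplus/0]_(xb : {ffun 'I_n -> {set X}}) \big[Rplus/0]_(y : {ffun 'I_n -> Y})
             quot_source Pt P xb y = \big[Rplus/0]_(x : {ffun 'I_n -> X}) \big[Rplus/0]_(y : {ffun 'I_n -> Y}) P n x y.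
    transitivity (\big[Rplus/0]_(xb : {ffun 'I_n -> {set X}}) \big[Rplus/0]_(y : {ffun 'I_n -> Y})
             (1 * quot_source Pt P xb y)).
      by apply: eq_bigr => xb _; apply: eq_bigr => y _; ring.
    rewrite (quot_sum Pt P (fun _ _ => 1)); apply: eq_bigr => x _; apply: eq_bigr => y _; ring.
  rewrite e2 hP1; lra.
have [g hg] := binning [ffun=> set0] hL hQ0 hQ1 hG.
exists (bincode [ffun=> set0] (Gset Pt c fn k) g); split; first by [].
apply: (Rle_trans _ _ _ hg).
have e1 : INR K / INR (K * n.+1) = / INR n.+1.
  rewrite (mult_INR K n.+1); field; split; apply: Rgt_not_eq; apply: INR_pos => //.
rewrite e1; apply: Rplus_le_compat_r.
rewrite (quot_sum Pt P (fun xb y => ind (xb \notin Gset Pt c fn k y))).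
apply: (@Rle_trans _ (\big[Rplus/0]_(x : {ffun 'I_n -> X}) \big[Rplus/0]_(y : {ffun 'I_n -> Y})
     (ind (~~ (#|badset c fn x y| <= k)%nat) * P n x y))).
  apply: rsum_le => x _; apply: rsum_le => y _.
  apply: Rmult_le_compat_r; first exact: hP.
  case hb: (#|badset c fn x y| <= k)%nat; last by rewrite /ind /=; case: (_ \notin _); lra.
  have -> : cells Pt x \in Gset Pt c fn k y.
    by rewrite inE; apply/existsP; exists x; rewrite eqxx hb.
  rewrite /ind /=; lra.
apply: (Rle_trans _ _ _ (@markov X Y Zn n P c fn k q hq hP hs)).
have hk1 := INR_pos (ltn0Sn k).
have hnk : INR n <= INR k.+1 * INR dd.
  rewrite -mult_INR; apply: le_INR; apply/leP; rewrite multE; exact: ltnW (ltn_ceil n hdd).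
have he := @err_ge0 X Y Zn n P fn c hP.
have hY := pos_INR #|Y|.
have hq0 : 0 < / q by apply: Rinv_0_lt_compat; lra.
set E := err_prob P fn c in he *.
have hC : 0 <= INR #|Y| * (/ q * (INR #|Y| * E)).
  apply: Rmult_le_pos => //; apply: Rmult_le_pos; [lra | exact: Rmult_le_pos].
have -> : / INR k.+1 * (INR n * (INR #|Y| * (/ q * (INR #|Y| * E)))) =
          (INR n / INR k.+1) * (INR #|Y| * (/ q * (INR #|Y| * E))) by rewrite /Rdiv; ring.
have hnd : INR n / INR k.+1 <= INR dd.
  apply: (Rmult_le_reg_r (INR k.+1)) => //; rewrite /Rdiv Rmult_assoc Rinv_l; lra.
apply: (@Rle_trans _ (INR dd * (INR #|Y| * (/ q * (INR #|Y| * E))))).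
  by apply: Rmult_le_compat_r.
apply: Req_le; ring.
Qed.


Lemma expn_mono m n e : (m <= n)%nat -> (expn m e <= expn n e)%nat.
Proof. move=> h; elim: e => [|e IH]; first by []. rewrite !expnS; exact: leq_mul. Qed.

Lemma V_pos dd T0 AS N : (0 < T0)%nat ->
  (0 < expn (T0 + AS) N %/ expn T0 (N - N %/ dd))%nat.
Proof.
move=> hT0; rewrite divn_gt0 ?expn_gt0 ?hT0 //.
apply: (@leq_trans (expn T0 N)); first by apply: leq_pexp2l => //; exact: leq_subr.
apply: expn_mono; exact: leq_addr.
Qed.

Lemma INR_subn a b : (b <= a)%nat -> INR (a - b)%nat = INR a - INR b.
Proof.
move=> h; have e : INR (a - b)%nat + INR b = INR a by rewrite -plus_INR plusE subnK.
lra.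
Qed.

Lemma lnV_bound N dd T0 AS : (0 < dd)%nat -> (0 < T0)%nat ->
  ln (INR (expn (T0 + AS) N %/ expn T0 (N - N %/ dd))) <=
  INR N * (ln (INR (T0 + AS)) - ln (INR T0)) + INR N / INR dd * ln (INR T0).
Proof.
move=> hdd hT0.
set k := (N %/ dd)%nat.
set V := (expn (T0 + AS) N %/ expn T0 (N - k))%nat.
have hV : (0 < V)%nat by exact: V_pos.
have hT : 0 < INR T0 := INR_pos hT0.
have hTA : 0 < INR (T0 + AS) by apply: INR_pos; rewrite addn_gt0 hT0.
have h1 : (V * expn T0 (N - k) <= expn (T0 + AS) N)%nat by exact: leq_divM.
have h2 : ln (INR V) + INR (N - k)%nat * ln (INR T0) <= INR N * ln (INR (T0 + AS)).
  rewrite -ln_pow // -ln_pow // -ln_mult; [|exact: INR_pos|exact: pow_lt].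
  apply: ln_le; first by apply: Rmult_lt_0_compat; [exact: INR_pos | exact: pow_lt].
  rewrite -!INR_expn -mult_INR; apply: le_INR; apply/leP; by rewrite multE.
have hk : (k <= N)%nat by exact: leq_div.
rewrite INR_subn // in h2.
have hkd : INR k <= INR N / INR dd.
  have hd := INR_pos hdd.
  apply: (Rmult_le_reg_r (INR dd)) => //; rewrite /Rdiv Rmult_assoc Rinv_l; last lra.
  rewrite Rmult_1_r -mult_INR; apply: le_INR; apply/leP; rewrite multE; exact: leq_divM.
have hl : 0 <= ln (INR T0).
  rewrite -ln_1; apply: ln_le; first lra.
  have := le_INR 1 T0 (ltP hT0); rewrite /=; lra.
have : INR k * ln (INR T0) <= INR N / INR dd * ln (INR T0) by apply: Rmult_le_compat_r.
lra.
Qed.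


Lemma cv_lin (u : nat -> R) C : Un_cv u 0 -> 0 <= C ->
  Un_cv (fun n => C * u n + / INR n.+1) 0.
Proof.
move=> hu hC eps he.
have hC1 : 0 < C + 1 by lra.
have [N1 HN1] := hu (eps / 2 / (C + 1)) ltac:(apply: Rdiv_lt_0_compat; lra).
have [N2 HN2] := INR_unbounded (2 / eps).
exists (maxn N1 N2) => n /leP hn.
have h1 := HN1 n (elimT leP (leq_trans (leq_maxl _ _) hn)).
rewrite /R_dist Rminus_0_r in h1 *.
have hn2 : INR N2 <= INR n by apply: le_INR; apply/leP; exact: leq_trans (leq_maxr _ _) hn.
have hN : 0 < INR n.+1 := INR_pos (ltn0Sn n).
have hSn : INR n.+1 = INR n + 1 by rewrite S_INR.
have hinv : / INR n.+1 < eps / 2.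
  have h2e : 2 / eps < INR n.+1 by lra.
  apply: (Rmult_lt_reg_r (INR n.+1)) => //; rewrite Rinv_l; last lra.
  have : 2 / eps * eps = 2 by field; lra.
  have : eps * (2 / eps) < eps * INR n.+1 by apply: Rmult_lt_compat_l.
  lra.
have hCu : Rabs (C * u n) <= C * (eps / 2 / (C + 1)).
  rewrite Rabs_mult Rabs_right; last lra.
  apply: Rmult_le_compat_l => //; lra.
have hCe : C * (eps / 2 / (C + 1)) <= eps / 2.
  apply: (Rmult_le_reg_r (C + 1)) => //.
  have -> : C * (eps / 2 / (C + 1)) * (C + 1) = C * (eps / 2) by field; lra.
  nra.
have hi0 : 0 < / INR n.+1 by apply: Rinv_0_lt_compat.
have := Rabs_triang (C * u n) (/ INR n.+1).
rewrite (Rabs_right (/ INR n.+1)) ?Rminus_0_r; lra.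
Qed.

Definition idcode (A Y : finType) n : code A Y {ffun 'I_n -> A} n :=
  @Code A Y {ffun 'I_n -> A} n #|{: {ffun 'I_n -> A}}| (fun x => enum_rank x) (fun m y => enum_val m).

Lemma div2_le A b l N : 0 < l -> 0 < N -> A <= b * l * N -> A / l / N <= b.
Proof.
move=> hl hN h; apply: (Rmult_le_reg_r N) => //; apply: (Rmult_le_reg_r l) => //.
have -> : A / l / N * N * l = A by field; lra.
lra.
Qed.

Lemma T2 (X Y : finType) (Pt : {set {set X}}) (Z : nat -> Type)
  (f : forall n, {ffun 'I_n -> X} -> {ffun 'I_n -> Y} -> Z n) (P : source X Y)
  (HP : is_source P) (Hs : smooth_wrt_Y P) (Hf : forall n, informative Pt (f n)) (x0 : X) a :
  achievable P f a -> forall g, 0 < g -> achievable_SW (quot_source Pt P) (a + g).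
Proof.
move=> [c [Hcv Hrate]] g hg.
case: Hs => q [hq hs].
have xis : forall n, {xi : 'I_n -> (Y -> Z n) -> {set X} |
   forall i a0 x y, xi i (fun b => f n (repl x i a0) (repl y i b)) = pblock Pt a0}.
  move=> n; have H1 := proj1 (Hf n).
  exists (fun i => proj1_sig (constructive_indefinite_description _ (H1 i))).
  move=> i a0 x y; exact: (proj2_sig (constructive_indefinite_description _ (H1 i)) a0 x y).
set AS := #|{: {set X}}|.
have hl2 := ln2_pos.
have hgl : 0 < g * ln 2 by apply: Rmult_lt_0_compat.
have [T0' HT0] := INR_unbounded (8 * INR AS / (g * ln 2)).
set T0 := T0'.+1.
have hT0 : (0 < T0)%nat by [].
have hT0r : 0 < INR T0 := INR_pos hT0.
have hAS := pos_INR AS.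
have hT0b : ln (INR (T0 + AS)) - ln (INR T0) <= g * ln 2 / 8.
  have hx : 0 < 1 + INR AS / INR T0.
    have : 0 <= INR AS / INR T0 by apply: Rmult_le_pos => //; apply: Rlt_le; apply: Rinv_0_lt_compat.
    lra.
  have e : ln (INR (T0 + AS)) = ln (INR T0) + ln (1 + INR AS / INR T0).
    rewrite -ln_mult //; congr ln; rewrite plus_INR; field; lra.
  rewrite e.
  have hle := ln_le_sub1 hx.
  have hTT : INR T0' <= INR T0 by apply: le_INR; apply/leP; exact: leqnSn.
  have h8 : 8 * INR AS < g * ln 2 * INR T0.
    have : 8 * INR AS / (g * ln 2) * (g * ln 2) = 8 * INR AS by field; lra.
    have : 8 * INR AS / (g * ln 2) * (g * ln 2) < INR T0 * (g * ln 2).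
      apply: Rmult_lt_compat_r => //; lra.
    lra.
  have : INR AS / INR T0 <= g * ln 2 / 8.
    apply: (Rmult_le_reg_r (INR T0)) => //.
    have -> : INR AS / INR T0 * INR T0 = INR AS by field; lra.
    lra.
  lra.
have [dd' Hdd] := INR_unbounded (8 * ln (INR T0) / (g * ln 2)).
set dd := dd'.+1.
have hdd : (0 < dd)%nat by [].
have hddr : 0 < INR dd := INR_pos hdd.
have hddb : ln (INR T0) / INR dd <= g * ln 2 / 8.
  have hDD : INR dd' <= INR dd by apply: le_INR; apply/leP; exact: leqnSn.
  have h8 : 8 * ln (INR T0) < g * ln 2 * INR dd.
    have : 8 * ln (INR T0) / (g * ln 2) * (g * ln 2) = 8 * ln (INR T0) by field; lra.
    have : 8 * ln (INR T0) / (g * ln 2) * (g * ln 2) < INR dd * (g * ln 2).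
      apply: Rmult_lt_compat_r => //; lra.
    lra.
  apply: (Rmult_le_reg_r (INR dd)) => //.
  have -> : ln (INR T0) / INR dd * INR dd = ln (INR T0) by field; lra.
  lra.
have hq0 : 0 < / q by apply: Rinv_0_lt_compat; lra.
set C := INR dd * (INR #|Y| * (/ q * INR #|Y|)).
have hC : 0 <= C.
  apply: Rmult_le_pos; first lra; apply: Rmult_le_pos; first exact: pos_INR.
  apply: Rmult_le_pos; [lra | exact: pos_INR].
pose Lf n := (msize (c n) * (expn (T0 + AS) n %/ expn T0 (n - n %/ dd)) * n.+1)%nat.
have ex : forall n, exists cS : code {set X} Y {ffun 'I_n -> {set X}} n,
   (0 < n)%nat -> msize cS = Lf n /\
   err_prob (quot_source Pt P) (@f_id {set X} Y n) cS <= C * err_prob P (f n) (c n) + / INR n.+1.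
  move=> n; case: (posnP n) => [-> | hn].
    by exists (@idcode {set X} Y 0).
  have [hP hP1] := HP n hn.
  have [cS [h1 h2]] := @SWcode_n X Y Pt (Z n) n P (f n) (c n) (sval (xis n)) x0 dd T0 q
     hdd hT0 hq hP hP1 (hs n) (proj2_sig (xis n)).
  by exists cS => _; split.
pose cS n := proj1_sig (constructive_indefinite_description _ (ex n)).
have hcS : forall n, (0 < n)%nat -> msize (cS n) = Lf n /\
   err_prob (quot_source Pt P) (@f_id {set X} Y n) (cS n) <= C * err_prob P (f n) (c n) + / INR n.+1.
  move=> n; exact: (proj2_sig (constructive_indefinite_description _ (ex n))).
exists cS; split.
  apply: (squeeze (N := 1%nat) _ (cv_lin Hcv hC)) => n hn.
  split; last exact: (proj2 (hcS n hn)).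
  apply: err_ge0 => xb y; rewrite /quot_source /=; apply: rsum_ge0 => x _.
  exact: (proj1 (HP n hn)).
move=> eps he.
have [N1 HN1] := Hrate (g / 4) ltac:(lra).
have [N2 HN2] := @ln_sublin 1 (g / 4 * ln 2) ltac:(lra) ltac:(apply: Rmult_lt_0_compat; lra).
exists (maxn N1 N2) => n hn.
have h1 := HN1 n (leq_trans (leq_maxl _ _) hn).
have h2 := HN2 n (leq_trans (leq_maxr _ _) hn).
have [hm _] := hcS n.+1 (ltn0Sn n).
rewrite hm /Lf.
set M := msize (c n.+1) in h1 *.
set V := (expn (T0 + AS) n.+1 %/ expn T0 (n.+1 - n.+1 %/ dd))%nat.
have hM : (0 < M)%nat := msize_pos (c n.+1) [ffun=> x0].
have hV : (0 < V)%nat by exact: V_pos.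
rewrite log2_mul ?muln_gt0 ?hM ?hV // log2_mul //.
have hN := INR_pos (ltn0Sn n).
have h3 := @lnV_bound n.+1 dd T0 AS hdd hT0.
rewrite -/V in h3.
have hV3 : ln (INR V) <= g / 4 * ln 2 * INR n.+1.
  have e : INR n.+1 / INR dd * ln (INR T0) = INR n.+1 * (ln (INR T0) / INR dd) by field; lra.
  rewrite e in h3.
  have : INR n.+1 * (ln (INR (T0 + AS)) - ln (INR T0)) <= INR n.+1 * (g * ln 2 / 8)
    by apply: Rmult_le_compat_l; lra.
  have : INR n.+1 * (ln (INR T0) / INR dd) <= INR n.+1 * (g * ln 2 / 8)
    by apply: Rmult_le_compat_l; lra.
  lra.
have b2 : log2 (INR V) / INR n.+1 <= g / 4 by apply: div2_le.
have b3 : log2 (INR n.+2) / INR n.+1 <= g / 4 by apply: div2_le => //; lra.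
have e : (log2 (INR M) + log2 (INR V) + log2 (INR n.+2)) / INR n.+1 =
   log2 (INR M) / INR n.+1 + log2 (INR V) / INR n.+1 + log2 (INR n.+2) / INR n.+1 by field; lra.
rewrite e; lra.
Qed.



Lemma SW_nonempty (X Y : finType) (Pt : {set {set X}}) (P : source X Y) :
  achievable_SW (quot_source Pt P) (log2 (INR #|{: {set X}}|)).
Proof.
exists (fun n => @idcode {set X} Y n); split.
  have h0 : forall n, err_prob (quot_source Pt P) (@f_id {set X} Y n) (@idcode {set X} Y n) = 0.
    move=> n; rewrite /err_prob big1 // => xb _; rewrite big1 // => y _.
    case: excluded_middle_informative => // h; case: h; by rewrite /= enum_rankK.
  move=> eps he; exists 0%nat => n _; rewrite h0 /R_dist Rminus_0_r Rabs_R0; lra.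
move=> eps he; exists 0%nat => n _.
have hc : (0 < #|{: {set X}}|)%nat by apply/card_gt0P; exists set0.
change (msize (@idcode {set X} Y n.+1)) with #|{: {ffun 'I_n.+1 -> {set X}}}|.
rewrite card_ffun card_ord log2_pow //.
have hN := INR_pos (ltn0Sn n).
have -> : INR n.+1 * log2 (INR #|{: {set X}}|) / INR n.+1 = log2 (INR #|{: {set X}}|)
  by field; lra.
lra.
Qed.

Lemma SW_ge0 (X Y : finType) (Pt : {set {set X}}) (P : source X Y) b :
  achievable_SW (quot_source Pt P) b -> 0 <= b.
Proof.
case=> c [_ Hr]; apply: Rnot_lt_le => hb.
have [N HN] := Hr (- b / 2) ltac:(lra).
have h := HN N (leqnn N).
have hm : (0 < msize (c N.+1))%nat := msize_pos (c N.+1) [ffun=> set0].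
have hl := log2_ge0 hm.
have hN := INR_pos (ltn0Sn N).
have : 0 <= log2 (INR (msize (c N.+1))) / INR N.+1.
  apply: Rmult_le_pos => //; apply: Rlt_le; apply: Rinv_0_lt_compat; lra.
lra.
Qed.

Theorem theorem1 (X Y : finType) (Pt : {set {set X}})
  (HPt : partition Pt [set: X])
  (Z : nat -> Type)
  (f : forall n : nat, {ffun 'I_n -> X} -> {ffun 'I_n -> Y} -> Z n)
  (Hf : forall n : nat, informative Pt (f n))
  (P : source X Y) (HP : is_source P) (Hsmooth : smooth_wrt_Y P) :
  exists r : R,
    is_inf (achievable P f) r /\
    is_inf (achievable_SW (quot_source Pt P)) r.
Proof.
have [x0 _] : exists x0 : X, True.
  case: (pickP (@predT X)) => [x0 _|hX]; first by exists x0.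
  have [_ h1] := HP 1%nat (ltnSn 0).
  rewrite big1 in h1; first lra.
  move=> x _; by have := hX (x ord0).
apply: assembly.
- exists (log2 (INR #|{: {set X}}|)); exact: SW_nonempty.
- move=> b; exact: SW_ge0.
- move=> a Ha g hg; exact: (T2 HP Hsmooth Hf x0 Ha hg).
- move=> b Hb; exact: (T1 HP Hf x0 Hb).
Qed.
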